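(* Let $A\in\mathrm{SL}(2,\mathbb R)$. If $A\Lambda_q$ contains both $(1,0)^T$ and $(0,1)^T$, then $A\in G_q$ and in particular $A\Lambda_q=\Lambda_q$. Consequently: (1) for $B\in\mathrm{SL}(2,\mathbb R)$, $B\Lambda_q=\Lambda_q$ if and only if $B\in G_q$; hence the sets $C\Lambda_q$, $C\in\mathrm{SL}(2,\mathbb R)$, are in bijection with $\mathrm{SL}(2,\mathbb R)/G_q$ via $C\Lambda_q\leftrightarrow CG_q$; (2) for $B\in\mathrm{SL}(2,\mathbb R)$, if $B\Lambda_q$ contains a horizontal vector $(a,0)^T$ with $a>0$, then there exists $b\in\mathbb R$ with $B\Lambda_q=g_{a,b}\Lambda_q$.
   Context: Fix an integer $q\ge3$, let $\lambda_q=2\cos(\pi/q)$, and let $G_q\subset \mathrm{SL}(2,\mathbb R)$ be the Hecke triangle group generated by $S=\begin{pmatrix}0&-1\\1&0\end{pmatrix}$ and $T_q=\begin{pmatrix}1&\lambda_q\\0&1\end{pmatrix}$, acting linearly on $\mathbb R^2$. Set $\Lambda_q=G_q(1,0)^T$, and for $A\in\mathrm{SL}(2,\mathbb R)$ write $A\Lambda_q=\{A\mathbf v:\mathbf v\in\Lambda_q\}$. For $a>0$, $b\in\mathbb R$, $g_{a,b}=\begin{pmatrix}a&b\\0&a^{-1}\end{pmatrix}$. *)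

(* Defs.v *)
From Stdlib Require Import Reals Lra.
Open Scope R_scope.

Record mat2 : Type := Mat2 { m11 : R; m12 : R; m21 : R; m22 : R }.
Definition vec2 : Type := (R * R)%type.

Definition mmul (A B : mat2) : mat2 :=
  Mat2 (m11 A * m11 B + m12 A * m21 B) (m11 A * m12 B + m12 A * m22 B)
       (m21 A * m11 B + m22 A * m21 B) (m21 A * m12 B + m22 A * m22 B).

Definition mvec (A : mat2) (v : vec2) : vec2 :=
  (m11 A * fst v + m12 A * snd v, m21 A * fst v + m22 A * snd v).

Definition det2 (A : mat2) : R := m11 A * m22 A - m12 A * m21 A.
Definition SL2 (A : mat2) : Prop := det2 A = 1.

(* inverse of an SL(2,R) matrix (adjugate) *)
Definition minv (A : mat2) : mat2 := Mat2 (m22 A) (- m12 A) (- m21 A) (m11 A).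

Definition Id2 : mat2 := Mat2 1 0 0 1.

Definition lambda (q : nat) : R := 2 * cos (PI / INR q).

Definition Smat : mat2 := Mat2 0 (-1) 1 0.
Definition Tmat (q : nat) : mat2 := Mat2 1 (lambda q) 0 1.

Inductive Gq (q : nat) : mat2 -> Prop :=
| Gq_id : Gq q Id2
| Gq_S : forall M, Gq q M -> Gq q (mmul Smat M)
| Gq_Sinv : forall M, Gq q M -> Gq q (mmul (minv Smat) M)
| Gq_T : forall M, Gq q M -> Gq q (mmul (Tmat q) M)
| Gq_Tinv : forall M, Gq q M -> Gq q (mmul (minv (Tmat q)) M).

Definition Lambda (q : nat) (v : vec2) : Prop :=
  exists M, Gq q M /\ v = mvec M (1, 0).

Definition translate (A : mat2) (q : nat) (v : vec2) : Prop :=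
  exists w, Lambda q w /\ v = mvec A w.

Definition set_eq (P Q : vec2 -> Prop) : Prop := forall v, P v <-> Q v.

Definition gab (a b : R) : mat2 := Mat2 a b 0 (/ a).

(* Main.v *)
Require Import Defs.
From Stdlib Require Import Reals Nsatz Lra Lia Psatz ZArith.
Open Scope R_scope.

Fixpoint sq (l : R) (k : nat) : R :=
  match k with
  | O => 0
  | S k' => match k' with O => 1 | S k'' => l * sq l k' - sq l k'' end
  end.

Lemma sq_SS l k : sq l (S (S k)) = l * sq l (S k) - sq l k.
Proof. reflexivity. Qed.

Lemma theta_facts (q : nat) : (3 <= q)%nat ->
  0 < PI / INR q /\ PI / INR q <= PI / 3 /\ 0 < sin (PI / INR q)
  /\ 0 < cos (PI / INR q) /\ cos (PI / INR q) < 1.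
Proof.
  intros hq.
  assert (H3 : 3 <= INR q) by (replace 3 with (INR 3) by (simpl; lra); apply le_INR; exact hq).
  pose proof PI_RGT_0.
  assert (h1 : 0 < PI / INR q) by (apply Rdiv_lt_0_compat; lra).
  assert (h2 : PI / INR q <= PI / 3).
  { unfold Rdiv. apply Rmult_le_compat_l; [lra|]. apply Rinv_le_contravar; lra. }
  assert (hs : 0 < sin (PI / INR q)) by (apply sin_gt_0; lra).
  assert (hc : 0 < cos (PI / INR q)) by (apply cos_gt_0; lra).
  repeat split; try lra.
  pose proof (sin2_cos2 (PI / INR q)). unfold Rsqr in *. nra.
Qed.

Lemma sq_sin (q : nat) (hq : (3 <= q)%nat) k :
  sq (lambda q) k = sin (INR k * (PI / INR q)) / sin (PI / INR q).
Proof.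
  destruct (theta_facts q hq) as (h1 & h2 & hs & hc & hc1).
  set (t := PI / INR q) in *.
  assert (H : forall k, sq (lambda q) k = sin (INR k * t) / sin t /\
                        sq (lambda q) (S k) = sin (INR (S k) * t) / sin t).
  { induction k0 as [|j IH].
    - simpl. split; [rewrite Rmult_0_l, sin_0; field; lra | rewrite Rmult_1_l; field; lra].
    - destruct IH as [IH1 IH2]. split; [exact IH2|].
      rewrite sq_SS, IH1, IH2. unfold lambda; fold t.
      replace (INR (S (S j)) * t) with (INR (S j) * t + t) by (rewrite (S_INR (S j)); ring).
      replace (INR j * t) with (INR (S j) * t - t) by (rewrite (S_INR j); ring).
      rewrite sin_plus, sin_minus. field. lra. }
  apply H.
Qed.

Lemma sq_facts (q : nat) (hq : (3 <= q)%nat) :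
  sq (lambda q) q = 0 /\ sq (lambda q) (q - 1) = 1 /\
  (forall k, (k <= q)%nat -> 0 <= sq (lambda q) k) /\
  (forall k, (1 <= k)%nat -> (k <= q - 1)%nat -> 1 <= sq (lambda q) k).
Proof.
  destruct (theta_facts q hq) as (h1 & h2 & hs & hc & hc1).
  assert (Hq : 3 <= INR q) by (replace 3 with (INR 3) by (simpl; lra); apply le_INR; exact hq).
  pose proof PI_RGT_0.
  assert (Ht : INR q * (PI / INR q) = PI) by (field; lra).
  split; [|split; [|split]].
  - rewrite sq_sin by exact hq. rewrite Ht, sin_PI. field; lra.
  - rewrite sq_sin by exact hq. rewrite minus_INR by lia.
    replace ((INR q - INR 1) * (PI / INR q)) with (PI - PI / INR q) by (simpl; field; lra).
    rewrite sin_PI_x. field; lra.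
  - intros k hk. rewrite sq_sin by exact hq. apply Rmult_le_pos; [|left; apply Rinv_0_lt_compat; lra].
    apply sin_ge_0. apply Rmult_le_pos; [apply pos_INR|lra].
    apply le_INR in hk. rewrite <- Ht at 2. apply Rmult_le_compat_r; lra.
  - intros k hk1 hk2. rewrite sq_sin by exact hq.
    apply le_INR in hk1. apply le_INR in hk2. rewrite minus_INR in hk2 by lia. simpl INR in hk1, hk2.
    set (t := PI / INR q) in *.
    assert (Hk1 : t <= INR k * t) by nra.
    assert (Hk2 : INR k * t <= PI - t) by (rewrite <- Ht; nra).
    apply (Rmult_le_reg_r (sin t)); [lra|]. unfold Rdiv. rewrite Rmult_assoc, Rinv_l by lra.
    rewrite Rmult_1_l, Rmult_1_r.
    destruct (Rle_dec (INR k * t) (PI/2)).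
    + apply sin_incr_1; lra.
    + rewrite <- (sin_PI_x (INR k * t)). apply sin_incr_1; lra.
Qed.
Definition Vv (l : R) (v : vec2) : vec2 := (l * fst v - snd v, fst v).
Definition iterV (l : R) (k : nat) (v : vec2) : vec2 := Nat.iter k (Vv l) v.
Definition Sv (v : vec2) : vec2 := (- snd v, fst v).
Definition negv (v : vec2) : vec2 := (- fst v, - snd v).

Lemma iterV_S l k v : iterV l (S k) v = Vv l (iterV l k v).
Proof. reflexivity. Qed.

Lemma iterV_formula l k x y :
  iterV l (S k) (x, y) = (sq l (S (S k)) * x - sq l (S k) * y, sq l (S k) * x - sq l k * y).
Proof.
  induction k.
  - simpl. unfold Vv; simpl. f_equal; ring.
  - rewrite iterV_S, IHk. rewrite (sq_SS l (S k)), (sq_SS l k). unfold Vv. cbn [fst snd].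
    f_equal; ring.
Qed.

Lemma iterV_neg l k v : iterV l k (negv v) = negv (iterV l k v).
Proof.
  induction k; [reflexivity|]. rewrite !iterV_S, IHk.
  destruct (iterV l k v). unfold Vv, negv; simpl. f_equal; ring.
Qed.

Lemma iterV_q q (hq : (3 <= q)%nat) v : iterV (lambda q) q v = negv v.
Proof.
  destruct (sq_facts q hq) as (H0 & H1 & _).
  destruct q as [|q']; [lia|]. destruct v as [x y].
  rewrite iterV_formula. replace (S q' - 1)%nat with q' in H1 by lia.
  rewrite sq_SS, H0, H1. unfold negv; simpl. f_equal; ring.
Qed.

Definition e1 : vec2 := (1, 0).

Inductive Base (q : nat) : vec2 -> Prop :=
| B_e1 : Base q e1
| B_neg : forall v, Base q v -> Base q (negv v)
| B_SV : forall i v, (1 <= i)%nat -> (i <= q - 1)%nat -> Base q v ->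
    Base q (Sv (iterV (lambda q) i v)).

Definition Good (q : nat) (v : vec2) : Prop :=
  exists j n, (j <= q - 1)%nat /\ Base q n /\ v = iterV (lambda q) j n.

Lemma Good_neg q v : Good q v -> Good q (negv v).
Proof.
  intros (j & n & hj & hn & ->). exists j, (negv n). repeat split; auto.
  - apply B_neg; auto.
  - rewrite iterV_neg; auto.
Qed.

Lemma Good_V q (hq : (3 <= q)%nat) v : Good q v -> Good q (Vv (lambda q) v).
Proof.
  intros (j & n & hj & hn & ->).
  destruct (Nat.eq_dec j (q - 1)) as [e|ne].
  - exists 0%nat, (negv n). repeat split; [lia| apply B_neg; auto|].
    rewrite <- iterV_S. replace (S j) with q by lia. rewrite iterV_q; auto.
  - exists (S j), n. repeat split; auto. lia.
Qed.

Lemma Sv_neg v : Sv (negv v) = negv (Sv v).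
Proof. destruct v; unfold Sv, negv; simpl; reflexivity. Qed.

Lemma negv_negv v : negv (negv v) = v.
Proof. destruct v; unfold negv; simpl; f_equal; ring. Qed.

Lemma Good_S q (hq : (3 <= q)%nat) v : Good q v -> Good q (Sv v).
Proof.
  intros (j & n & hj & hn & ->).
  destruct j as [|j].
  - simpl. clear hj. induction hn.
    + exists (q - 1)%nat, e1. repeat split; auto; [constructor|].
      destruct (sq_facts q hq) as (H0 & H1 & _).
      replace (q - 1)%nat with (S (q - 2)) in * by lia.
      unfold e1. rewrite iterV_formula. replace (S (S (q - 2))) with q by lia.
      rewrite H0, H1. unfold Sv; simpl; f_equal; ring.
    + rewrite Sv_neg. apply Good_neg; auto.
    + exists i, (negv v). split; [lia|split; [apply B_neg; assumption|]].
      rewrite iterV_neg. destruct (iterV (lambda q) i v). unfold Sv, negv; simpl; f_equal; ring.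
  - exists 0%nat, (Sv (iterV (lambda q) (S j) n)). split; [lia|split; [|reflexivity]].
    apply B_SV; auto; lia.
Qed.

Definition NQ (v : vec2) : Prop := fst v <= -1 /\ 1 <= snd v.

Lemma SV_formula l i x y : Sv (iterV l (S i) (x, y)) =
  (- (sq l (S i) * x - sq l i * y), sq l (S (S i)) * x - sq l (S i) * y).
Proof. rewrite iterV_formula. unfold Sv. cbn [fst snd]. reflexivity. Qed.

Lemma Base_quant q (hq : (3 <= q)%nat) n :
  Base q n -> n = e1 \/ n = negv e1 \/ NQ n \/ NQ (negv n).
Proof.
  destruct (sq_facts q hq) as (H0 & H1 & Hpos & Hge1).
  induction 1 as [| v _ IH | i v hi1 hi2 _ IH].
  - auto.
  - destruct IH as [->|[->|[h|h]]].
    + auto.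
    + left; apply negv_negv.
    + right; right; right. rewrite negv_negv. auto.
    + right; right; left; auto.
  - destruct i as [|i]; [lia|].
    assert (Hi : 1 <= sq (lambda q) (S i)) by (apply Hge1; lia).
    assert (Hi2 : 0 <= sq (lambda q) (S (S i))) by (apply Hpos; lia).
    assert (Hi0 : 0 <= sq (lambda q) i) by (apply Hpos; lia).
    set (a := sq (lambda q) (S (S i))) in *.
    set (b := sq (lambda q) (S i)) in *.
    set (c := sq (lambda q) i) in *.
    destruct v as [x y]. rewrite SV_formula. fold a b c.
    unfold e1, negv, NQ in *. cbn [fst snd] in *.
    destruct (Nat.eq_dec (S i) (q - 1)) as [e|ne].
    + assert (E2 : a = 0) by (unfold a; rewrite <- H0; f_equal; lia).
      assert (E1 : b = 1) by (unfold b; rewrite <- H1; f_equal; lia).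
      rewrite E1, E2.
      destruct IH as [h|[h|[h|h]]]; try (injection h; intros -> ->).
      * right; left; f_equal; ring.
      * left; f_equal; ring.
      * right; right; right. cbn [fst snd]. split; nra.
      * right; right; left. cbn [fst snd]. split; nra.
    + assert (Hi3 : 1 <= a) by (apply Hge1; lia).
      destruct IH as [h|[h|[h|h]]]; try (injection h; intros -> ->).
      * right; right; left. cbn [fst snd]. split; lra.
      * right; right; right. cbn [fst snd]. split; lra.
      * right; right; right. cbn [fst snd]. split; nra.
      * right; right; left. cbn [fst snd]. split; nra.
Qed.

Lemma Good_snd q (hq : (3 <= q)%nat) v : Good q v -> snd v = 0 \/ 1 <= Rabs (snd v).
Proof.
  destruct (sq_facts q hq) as (H0 & H1 & Hpos & Hge1).
  intros (j & n & hj & hn & ->).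
  destruct n as [x y].
  pose proof (Base_quant q hq _ hn) as HQ.
  unfold e1, negv, NQ in HQ. cbn [fst snd] in HQ.
  destruct j as [|j].
  - change (iterV (lambda q) 0 (x, y)) with (x, y). cbn [snd].
    destruct HQ as [h|[h|[h|h]]]; try (injection h; intros -> ->).
    + left; reflexivity.
    + left; ring.
    + right. rewrite Rabs_right; lra.
    + right. rewrite Rabs_left; lra.
  - rewrite iterV_formula. cbn [snd].
    assert (Hb : 1 <= sq (lambda q) (S j)) by (apply Hge1; lia).
    assert (Hc : 0 <= sq (lambda q) j) by (apply Hpos; lia).
    set (b := sq (lambda q) (S j)) in *. set (c := sq (lambda q) j) in *.
    right.
    destruct HQ as [h|[h|[h|h]]]; try (injection h; intros -> ->).
    + rewrite Rabs_right; lra.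
    + rewrite Rabs_left; lra.
    + rewrite Rabs_left; nra.
    + rewrite Rabs_right; nra.
Qed.

Lemma mvec_mmul A B v : mvec (mmul A B) v = mvec A (mvec B v).
Proof. destruct A, B, v; unfold mvec, mmul; cbn; f_equal; ring. Qed.

Lemma mvec_Id v : mvec Id2 v = v.
Proof. destruct v; unfold mvec, Id2; cbn; f_equal; ring. Qed.

Lemma mvec_minv_l A v : det2 A = 1 -> mvec (minv A) (mvec A v) = v.
Proof. destruct A, v; unfold det2, mvec, minv; cbn; intros H; f_equal; nsatz. Qed.

Lemma mvec_minv_r A v : det2 A = 1 -> mvec A (mvec (minv A) v) = v.
Proof. destruct A, v; unfold det2, mvec, minv; cbn; intros H; f_equal; nsatz. Qed.

Lemma mmul_assoc A B C : mmul (mmul A B) C = mmul A (mmul B C).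
Proof. destruct A, B, C; unfold mmul; cbn; f_equal; ring. Qed.

Lemma mmul_id_l A : mmul Id2 A = A.
Proof. destruct A; unfold mmul, Id2; cbn; f_equal; ring. Qed.

Lemma mmul_id_r A : mmul A Id2 = A.
Proof. destruct A; unfold mmul, Id2; cbn; f_equal; ring. Qed.

Lemma mmul_minv_r A : det2 A = 1 -> mmul A (minv A) = Id2.
Proof. destruct A; unfold det2, mmul, minv, Id2; cbn; intros H; f_equal; nsatz. Qed.

Lemma mmul_minv_l A : det2 A = 1 -> mmul (minv A) A = Id2.
Proof. destruct A; unfold det2, mmul, minv, Id2; cbn; intros H; f_equal; nsatz. Qed.

Lemma minv_mmul A B : minv (mmul A B) = mmul (minv B) (minv A).
Proof. destruct A, B; unfold mmul, minv; cbn; f_equal; ring. Qed.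

Lemma minv_minv A : minv (minv A) = A.
Proof. destruct A; unfold minv; cbn; f_equal; ring. Qed.

Lemma minv_Id : minv Id2 = Id2.
Proof. unfold minv, Id2; cbn; f_equal; ring. Qed.

Lemma det_mmul A B : det2 (mmul A B) = det2 A * det2 B.
Proof. destruct A, B; unfold det2, mmul; cbn; ring. Qed.

Lemma det_minv A : det2 (minv A) = det2 A.
Proof. destruct A; unfold det2, minv; cbn; ring. Qed.

Lemma Gq_det q M : Gq q M -> det2 M = 1.
Proof.
  induction 1; try rewrite det_mmul; try rewrite det_minv; rewrite ?IHGq;
    unfold det2, Id2, Smat, Tmat; cbn; ring.
Qed.

Lemma Gq_mul q M N : Gq q M -> Gq q N -> Gq q (mmul M N).
Proof.
  induction 1; intros HN.
  - rewrite mmul_id_l; auto.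
  - rewrite mmul_assoc; constructor; auto.
  - rewrite mmul_assoc; constructor; auto.
  - rewrite mmul_assoc; constructor; auto.
  - rewrite mmul_assoc; constructor; auto.
Qed.

Lemma Gq_gen q X : (X = Smat \/ X = minv Smat \/ X = Tmat q \/ X = minv (Tmat q)) -> Gq q X.
Proof.
  intros [ -> | [ -> | [ -> | -> ] ] ]; rewrite <- (mmul_id_r _); constructor; constructor.
Qed.

Lemma Gq_inv q M : Gq q M -> Gq q (minv M).
Proof.
  induction 1.
  - rewrite minv_Id; constructor.
  - rewrite minv_mmul. apply Gq_mul; auto. apply Gq_gen; auto.
  - rewrite minv_mmul, minv_minv. apply Gq_mul; auto. apply Gq_gen; auto.
  - rewrite minv_mmul. apply Gq_mul; auto. apply Gq_gen; auto.
  - rewrite minv_mmul, minv_minv. apply Gq_mul; auto. apply Gq_gen; auto.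
Qed.

Lemma Lambda_closed q M w : Gq q M -> Lambda q w -> Lambda q (mvec M w).
Proof.
  intros HM (N & HN & ->). exists (mmul M N). split.
  - apply Gq_mul; auto.
  - rewrite mvec_mmul; auto.
Qed.

Lemma Lambda_e1 q : Lambda q (1, 0).
Proof. exists Id2. split; [constructor | rewrite mvec_Id; auto]. Qed.

Lemma translate_Gq q M : Gq q M -> set_eq (translate M q) (Lambda q).
Proof.
  intros HM v. split.
  - intros (w & Hw & ->). apply Lambda_closed; auto.
  - intros Hv. exists (mvec (minv M) v). split.
    + apply Lambda_closed; auto. apply Gq_inv; auto.
    + rewrite mvec_minv_r; auto. apply (Gq_det q); auto.
Qed.

Lemma Good_iter q (hq : (3 <= q)%nat) k v : Good q v -> Good q (iterV (lambda q) k v).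
Proof. induction k; intros H; [exact H|]. rewrite iterV_S. apply Good_V; auto. Qed.

Lemma Lambda_Good q (hq : (3 <= q)%nat) v : Lambda q v -> Good q v.
Proof.
  intros (M & HM & ->). induction HM.
  - rewrite mvec_Id. exists 0%nat, e1. split; [lia|split; [constructor|reflexivity]].
  - rewrite mvec_mmul. replace (mvec Smat (mvec M (1, 0))) with (Sv (mvec M (1, 0))).
    + apply Good_S; auto.
    + destruct (mvec M (1,0)); unfold Sv, mvec, Smat; cbn; f_equal; ring.
  - rewrite mvec_mmul. replace (mvec (minv Smat) (mvec M (1, 0))) with (negv (Sv (mvec M (1, 0)))).
    + apply Good_neg, Good_S; auto.
    + destruct (mvec M (1,0)); unfold negv, Sv, mvec, minv, Smat; cbn; f_equal; ring.
  - rewrite mvec_mmul. replace (mvec (Tmat q) (mvec M (1, 0))) with (negv (Vv (lambda q) (Sv (mvec M (1, 0))))).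
    + apply Good_neg, Good_V, Good_S; auto.
    + destruct (mvec M (1,0)); unfold negv, Vv, Sv, mvec, Tmat; cbn; f_equal; ring.
  - rewrite mvec_mmul.
    replace (mvec (minv (Tmat q)) (mvec M (1, 0))) with
      (Sv (negv (iterV (lambda q) (q - 1) (mvec M (1, 0))))).
    + apply Good_S, Good_neg, Good_iter; auto.
    + destruct (sq_facts q hq) as (H0 & H1 & _).
      assert (H2 : sq (lambda q) (q - 2) = lambda q).
      { pose proof (sq_SS (lambda q) (q - 2)) as E.
        replace (S (S (q - 2))) with q in E by lia. replace (S (q - 2)) with (q - 1)%nat in E by lia.
        rewrite H0, H1 in E. lra. }
      destruct (mvec M (1,0)) as [x y].
      replace (q - 1)%nat with (S (q - 2)) by lia. rewrite iterV_formula.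
      replace (S (S (q - 2))) with q by lia. replace (S (q - 2)) with (q - 1)%nat by lia.
      rewrite H0, H1, H2. unfold negv, Sv, mvec, minv, Tmat; cbn; f_equal; ring.
Qed.

Lemma Lambda_snd q (hq : (3 <= q)%nat) v : Lambda q v -> snd v = 0 \/ 1 <= Rabs (snd v).
Proof. intros H. apply (Good_snd q hq). apply Lambda_Good; auto. Qed.

Definition TR (x : R) : mat2 := Mat2 1 x 0 1.

Lemma Gq_TR q (k : Z) : Gq q (TR (IZR k * lambda q)).
Proof.
  induction k using Z.peano_ind.
  - replace (TR (IZR 0 * lambda q)) with Id2 by (unfold TR, Id2; f_equal; ring). constructor.
  - replace (TR (IZR (Z.succ k) * lambda q)) with (mmul (Tmat q) (TR (IZR k * lambda q))).
    + constructor; auto.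
    + rewrite succ_IZR. unfold TR, mmul, Tmat; cbn; f_equal; ring.
  - replace (TR (IZR (Z.pred k) * lambda q)) with (mmul (minv (Tmat q)) (TR (IZR k * lambda q))).
    + constructor; auto.
    + replace (Z.pred k) with (k - 1)%Z by lia. rewrite minus_IZR.
      unfold TR, mmul, minv, Tmat; cbn; f_equal; ring.
Qed.

Lemma lambda_bounds q : (3 <= q)%nat -> 0 < lambda q < 2.
Proof. intros hq. destruct (theta_facts q hq) as (_ & _ & _ & hc & hc1). unfold lambda. lra. Qed.

Lemma Key q (hq : (3 <= q)%nat) a : Lambda q (a, 1) -> exists k : Z, a = IZR k * lambda q.
Proof.
  intros Ha. destruct (lambda_bounds q hq) as [hl1 hl2].
  set (l := lambda q) in *.
  destruct (archimed (a / l)) as [u1 u2].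
  set (k := (up (a / l) - 1)%Z).
  assert (Hk : IZR k = IZR (up (a / l)) - 1) by (unfold k; rewrite minus_IZR; reflexivity).
  set (r := a - IZR k * l).
  assert (Hr0 : 0 <= r).
  { unfold r. rewrite Hk. apply (Rmult_le_reg_r (/ l)); [apply Rinv_0_lt_compat; lra|].
    rewrite Rmult_0_l. replace ((a - (IZR (up (a / l)) - 1) * l) * / l) with (a / l - IZR (up (a / l)) + 1)
      by (field; lra). lra. }
  assert (Hr1 : r < l).
  { unfold r. rewrite Hk. apply (Rmult_lt_reg_r (/ l)); [apply Rinv_0_lt_compat; lra|].
    replace ((a - (IZR (up (a / l)) - 1) * l) * / l) with (a / l - IZR (up (a / l)) + 1)
      by (field; lra). rewrite Rinv_r by lra. lra. }
  assert (L1 : Lambda q (r, 1)).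
  { replace (r, 1) with (mvec (TR (IZR (- k) * l)) (a, 1)).
    - apply Lambda_closed; auto. apply Gq_TR.
    - unfold r, mvec, TR; cbn. rewrite opp_IZR. f_equal; ring. }
  assert (L2 : Lambda q (r - l, 1)).
  { replace (r - l, 1) with (mvec (TR (IZR (- k - 1) * l)) (a, 1)).
    - apply Lambda_closed; auto. apply Gq_TR.
    - unfold r, mvec, TR; cbn. rewrite minus_IZR, opp_IZR. f_equal; ring. }
  apply (Lambda_closed q Smat) in L1; [|apply Gq_gen; auto].
  apply (Lambda_closed q Smat) in L2; [|apply Gq_gen; auto].
  apply (Lambda_snd q hq) in L1. apply (Lambda_snd q hq) in L2.
  unfold mvec, Smat in L1, L2; cbn in L1, L2.
  replace (1 * r + 0 * 1) with r in L1 by ring.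
  replace (1 * (r - l) + 0 * 1) with (r - l) in L2 by ring.
  exists k.
  assert (r = 0).
  { destruct L2 as [h|h]; [lra|]. rewrite Rabs_left in h by lra.
    destruct L1 as [h'|h']; [lra|]. rewrite Rabs_right in h' by lra. lra. }
  unfold r in H. lra.
Qed.

Lemma main_claim q (hq : (3 <= q)%nat) A : SL2 A ->
  translate A q (1, 0) -> translate A q (0, 1) -> Gq q A.
Proof.
  intros HA (w1 & Hw1 & E1) (w2 & Hw2 & E2).
  destruct Hw1 as (M1 & HM1 & ->).
  assert (dM1 := Gq_det q M1 HM1).
  set (u := mvec (minv M1) w2).
  assert (Hu : Lambda q u) by (apply Lambda_closed; auto; apply Gq_inv; auto).
  assert (EB1 : mvec (mmul A M1) (1, 0) = (1, 0)) by (rewrite mvec_mmul; auto).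
  assert (EB2 : mvec (mmul A M1) u = (0, 1)) by (unfold u; rewrite mvec_mmul, mvec_minv_r; auto).
  assert (dB : det2 (mmul A M1) = 1) by (rewrite det_mmul, dM1; unfold SL2 in HA; rewrite HA; ring).
  assert (EA : A = mmul (mmul A M1) (minv M1)) by (rewrite mmul_assoc, mmul_minv_r, mmul_id_r; auto).
  rewrite EA. apply Gq_mul; [|apply Gq_inv; auto].
  clearbody u. destruct (mmul A M1) as [b11 b12 b21 b22]. destruct u as [u1 u2].
  unfold mvec, det2 in *; cbn in *.
  injection EB1; intros F2 F1. injection EB2; intros G2 G1.
  assert (hb11 : b11 = 1) by lra. assert (hb21 : b21 = 0) by lra.
  subst b11 b21. assert (hb22 : b22 = 1) by lra. subst b22.
  assert (hu2 : u2 = 1) by lra. subst u2.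
  assert (hu1 : u1 = - b12) by lra. subst u1.
  destruct (Key q hq _ Hu) as [k Hk].
  replace (Mat2 1 b12 0 1) with (TR (IZR (- k) * lambda q)).
  - apply Gq_TR.
  - unfold TR. rewrite opp_IZR. f_equal. lra.
Qed.

Lemma Lambda_e2 q : Lambda q (0, 1).
Proof.
  replace (0, 1) with (mvec Smat (1, 0)).
  - apply Lambda_closed; [apply Gq_gen; auto| apply Lambda_e1].
  - unfold mvec, Smat; cbn; f_equal; ring.
Qed.

Lemma stab q (hq : (3 <= q)%nat) B : SL2 B -> (set_eq (translate B q) (Lambda q) <-> Gq q B).
Proof.
  intros HB. split.
  - intros H. apply (main_claim q hq); auto; apply H; [apply Lambda_e1 | apply Lambda_e2].
  - apply translate_Gq.
Qed.

Theorem mainTheorem4 (q : nat) (hq : (3 <= q)%nat) :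
  (* main claim *)
  (forall A : mat2, SL2 A ->
     translate A q (1, 0) -> translate A q (0, 1) ->
     Gq q A /\ set_eq (translate A q) (Lambda q)) /\
  (* (1): stabilizer of Lambda_q is G_q *)
  (forall B : mat2, SL2 B ->
     (set_eq (translate B q) (Lambda q) <-> Gq q B)) /\
  (* (1): C Lambda_q <-> C G_q is a well-defined bijection:
     C1 Lambda_q = C2 Lambda_q iff C1 G_q = C2 G_q iff C1^{-1} C2 in G_q *)
  (forall C1 C2 : mat2, SL2 C1 -> SL2 C2 ->
     (set_eq (translate C1 q) (translate C2 q) <-> Gq q (mmul (minv C1) C2))) /\
  (* (2) *)
  (forall (B : mat2) (a : R), SL2 B -> 0 < a -> translate B q (a, 0) ->
     exists b : R, set_eq (translate B q) (translate (gab a b) q)).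
Proof.
  split; [|split; [|split]].
  - intros A HA H1 H2. assert (G := main_claim q hq A HA H1 H2). split; auto. apply translate_Gq; auto.
  - apply stab; auto.
  - intros C1 C2 H1 H2. unfold SL2 in *.
    assert (dD : det2 (mmul (minv C1) C2) = 1) by (rewrite det_mmul, det_minv, H1, H2; ring).
    split.
    + intros H. apply (stab q hq); [exact dD|]. intros v. split.
      * intros (w & Hw & ->). rewrite mvec_mmul.
        assert (T2 : translate C2 q (mvec C2 w)) by (exists w; auto).
        apply H in T2. destruct T2 as (w' & Hw' & E).
        rewrite E, mvec_minv_l; auto.
      * intros Hv. assert (T1 : translate C1 q (mvec C1 v)) by (exists v; auto).
        apply H in T1. destruct T1 as (w & Hw & E). exists w. split; auto.
        rewrite mvec_mmul, <- E, mvec_minv_l; auto.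
    + intros HD v. split.
      * intros (w & Hw & ->). exists (mvec (minv (mmul (minv C1) C2)) w). split.
        -- apply Lambda_closed; auto. apply Gq_inv; auto.
        -- rewrite minv_mmul, minv_minv, mvec_mmul, mvec_minv_r; auto.
      * intros (w & Hw & ->). exists (mvec (mmul (minv C1) C2) w). split.
        -- apply Lambda_closed; auto.
        -- rewrite mvec_mmul, mvec_minv_r; auto.
  - intros B a HB Ha (w & Hw & E). destruct Hw as (M & HM & ->).
    assert (dM := Gq_det q M HM).
    assert (dE : det2 (mmul B M) = 1) by (rewrite det_mmul, dM; unfold SL2 in HB; rewrite HB; ring).
    rewrite <- mvec_mmul in E.
    exists (m12 (mmul B M)).
    assert (EE : mmul B M = gab a (m12 (mmul B M))).
    { destruct (mmul B M) as [b11 b12 b21 b22]. unfold mvec, det2, gab in *; cbn in *.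
      injection E; intros F2 F1. assert (h11 : b11 = a) by lra. assert (h21 : b21 = 0) by lra.
      rewrite h11, h21 in *.
      assert (Hb22 : b22 = / a).
      { apply (Rmult_eq_reg_l a); [|lra]. rewrite Rinv_r by lra. lra. }
      rewrite Hb22. reflexivity. }
    intros v. split.
    + intros (w & Hw & ->). exists (mvec (minv M) w). split.
      * apply Lambda_closed; auto. apply Gq_inv; auto.
      * rewrite <- EE, mvec_mmul, mvec_minv_r; auto.
    + intros (w & Hw & ->). exists (mvec M w). split.
      * apply Lambda_closed; auto.
      * rewrite <- EE, mvec_mmul; auto.
Qed.
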